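(* Let $m,n,r\ge1$ and let $\sigma:I^m\to J^r(\mathbb R^m,\mathbb R^n)$ be a section with $\sigma^{(r-1)}=0$. Then one can write $\sigma=\sum_\beta\sigma_\beta$, the sum ranging over multi-indices $\beta=(\beta_1,\dots,\beta_k)$ with $1\le\beta_j\le m$ and $k=|\beta|\le r$ (up to permutation), for sections $\sigma_\beta:I^m\to J^r(\mathbb R^m,\mathbb R^n)$ such that: each $\sigma_\beta$ is primitive with respect to the constant hyperplane field $\tau_\beta=\ker(dx_{\beta_1}+\dots+dx_{\beta_k})$; each $\sigma_\beta$ depends smoothly on $\sigma$; and if $\sigma=0$ on an open neighborhood of a closed subset $A\subset I^m$, then every $\sigma_\beta=0$ on an open neighborhood of $A$.
   Context: $I=[-1,1]$. $J^r(\mathbb R^m,\mathbb R^n)\cong\mathbb R^m\times(\mathcal P_r)^n$ via Taylor polynomials of degree $\le r$, with linear structure (sum of sections) from $\mathbb R^n$; $\sigma^{(r-1)}$ is the truncation to degree $\le r-1$. A section $\sigma$ is primitive with respect to a hyperplane field $\tau$ if $\sigma^\perp=0$, where $\sigma^\perp(x)$ for $\sigma(x)=j^r(h)(x)$ consists of the $(r-1)$-jet of $h$ at $x$ and the derivatives $\partial_\nu\partial_\alpha h(x)$, $|\alpha|=r-1$, $\nu\in\tau_x$. *)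

(* Defs.v *)
From HB Require Import structures.
From mathcomp Require Import all_boot all_order all_algebra.
From mathcomp Require Import reals.
From mathcomp Require Import mpoly.
Set Implicit Arguments. Unset Strict Implicit. Unset Printing Implicit Defensive.
Import Order.TTheory GRing.Theory Num.Theory.
Local Open Scope ring_scope.

Definition point (R : realType) (m : nat) := 'I_m -> R.

Definition in_cube (R : realType) (m : nat) (x : point R m) : Prop :=
  forall i, -1 <= x i <= 1.

Definition cube_open (R : realType) (m : nat) (U : point R m -> Prop) : Prop :=
  (forall x, U x -> in_cube x) /\
  (forall x, U x -> exists2 e : R, 0 < e &
     forall y, in_cube y -> (forall i, `|y i - x i| < e) -> U y).

Definition cube_closed (R : realType) (m : nat) (A : point R m -> Prop) : Prop :=
  (forall x, A x -> in_cube x) /\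
  cube_open (fun x => in_cube x /\ ~ A x).

(* The fibre of J^r(R^m,R^n) over a point x: an n-tuple of Taylor polynomials
   of degree <= r, written in the centered variables z = y - x
   (so the coefficient structure gives d_alpha h(x) = (d_alpha P).@[0]). *)
Definition jet (R : realType) (m n : nat) := 'I_n -> {mpoly R[m]}.

Definition is_rjet (R : realType) (m n r : nat) (J : jet R m n) : Prop :=
  forall j, (msize (J j) <= r.+1)%N.

Definition ptrunc (R : realType) (m k : nat) (p : {mpoly R[m]}) : {mpoly R[m]} :=
  \sum_(mono <- msupp p | (mdeg mono <= k)%N) p@_mono *: 'X_[mono].

Definition jet_trunc (R : realType) (m n k : nat) (J : jet R m n) : jet R m n :=
  fun j => ptrunc k (J j).

Definition dnu_dalpha (R : realType) (m n : nat) (J : jet R m n) (j : 'I_n)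
    (nu : point R m) (alpha : 'X_{1..m}) : R :=
  \sum_(i < m) nu i * ((mderiv i (mderivm alpha (J j))).@[fun _ => 0]).

Definition primitive_jet (R : realType) (m n r : nat) (tau : point R m -> Prop)
    (J : jet R m n) : Prop :=
  jet_trunc r.-1 J = (fun _ => 0) /\
  forall (alpha : 'X_{1..m}) (nu : point R m) (j : 'I_n),
    mdeg alpha = r.-1 -> tau nu -> dnu_dalpha J j nu alpha = 0.

Definition primitive_section (R : realType) (m n r : nat)
    (tau : point R m -> point R m -> Prop) (s : point R m -> jet R m n) : Prop :=
  forall x, in_cube x -> primitive_jet r (tau x) (s x).

(* Multi-indices beta = (beta_1,...,beta_k), 1 <= beta_j <= m, up to permutation,
   encoded by multiplicities b i = #{j | beta_j = i}; k = sum_i b i. *)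
Definition mindex (m r : nat) := {ffun 'I_m -> 'I_r.+1}.

Definition mindex_len (m r : nat) (b : mindex m r) : nat := (\sum_(i < m) b i)%N.

Definition admissible (m r : nat) (b : mindex m r) : bool :=
  (0 < mindex_len b <= r)%N.

Definition tau_beta (R : realType) (m r : nat) (b : mindex m r)
    (x nu : point R m) : Prop :=
  \sum_(i < m) (b i)%:R * nu i = 0.

Definition fib_linear (R : realType) (m n : nat) (L : jet R m n -> jet R m n) : Prop :=
  forall (a : R) (u v : jet R m n) (j : 'I_n),
    L (fun k => a *: u k + v k) j = a *: L u j + L v j.

(* Main.v *)
Require Import Defs.
From HB Require Import structures.
From mathcomp Require Import all_boot all_order all_algebra.
From mathcomp Require Import reals.
From mathcomp Require Import mpoly.
From Stdlib Require Import FunctionalExtensionality IndefiniteDescription.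
Set Implicit Arguments. Unset Strict Implicit. Unset Printing Implicit Defensive.
Import Order.TTheory GRing.Theory Num.Theory.
Local Open Scope ring_scope.

Lemma prod_natb (A : comNzRingType) (I : finType) (b : I -> bool) :
  \prod_i ((b i)%:R : A) = ([forall i, b i])%:R.
Proof.
case: (boolP [forall i, b i]) => H.
  rewrite big1 //= => i _; by move/forallP: H => /(_ i) ->.
move/forallPn: H => [i Hi]; rewrite (bigD1 i) //= (negbTE Hi) mul0r.
by [].
Qed.

Lemma surj_inj r (f : 'I_r -> 'I_r) : [forall k, k \in codom f] -> injective f.
Proof.
move/forallP=> H; apply/injectiveP; apply/injectiveP.
move=> x y; have /image_injP: #|[seq f x | x in 'I_r]| == #|'I_r|.
  rewrite eqn_leq; apply/andP; split.
    by rewrite (leq_trans (card_size _)) // size_image.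
  apply: subset_leq_card; apply/subsetP=> k _; exact: H.
by move=> h; apply: h.
Qed.

Lemma polar (A : comNzRingType) r (y : 'I_r -> A) :
  \sum_(phi : {ffun 'I_r -> bool})
     (\prod_k (if phi k then 1 else -1)) * (\sum_k (if phi k then y k else 0))^+r
  = (#|[set f : {ffun 'I_r -> 'I_r} | injectiveb f]|)%:R * \prod_k y k.
Proof.
have E1 : forall phi : {ffun 'I_r -> bool},
   (\sum_k (if phi k then y k else 0))^+r =
   \sum_(f : {ffun 'I_r -> 'I_r}) ([forall k, (k \in codom f) ==> phi k])%:R * \prod_t y (f t).
  move=> phi; set xx := (\sum_k _).
  have -> : xx ^+ r = \prod_(t < r) xx by rewrite prodr_const card_ord.
  rewrite /xx.
  rewrite bigA_distr_bigA /=; apply: eq_bigr => f _.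
  have -> : [forall k, (k \in codom f) ==> phi k] = [forall t, phi (f t)].
    apply/forallP/forallP => H t.
      by have := H (f t); rewrite codom_f.
    by apply/implyP => /codomP [x ->].
  rewrite -prod_natb -big_split /=; apply: eq_bigr => t _.
  by case: (phi (f t)); rewrite ?mul1r ?mul0r.
transitivity (\sum_(phi : {ffun 'I_r -> bool}) \sum_(f : {ffun 'I_r -> 'I_r})
   (\prod_k (if phi k then 1 else -1)) *
     (([forall k, (k \in codom f) ==> phi k])%:R * \prod_t y (f t))).
  apply: eq_bigr => phi _; rewrite -mulr_sumr; congr (_ * _); exact: E1.
rewrite exchange_big /=.
have E2 : forall f : {ffun 'I_r -> 'I_r},
  \sum_(phi : {ffun 'I_r -> bool}) (\prod_k (if phi k then 1 else -1)) *
     (([forall k, (k \in codom f) ==> phi k])%:R * \prod_t y (f t))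
  = ([forall k, k \in codom f])%:R * \prod_t y (f t).
  move=> f.
  transitivity (\sum_(phi : {ffun 'I_r -> bool}) (\prod_k ((if phi k then 1 else -1) * ((k \in codom f) ==> phi k)%:R)) * \prod_t y (f t)).
    apply: eq_bigr => phi _; rewrite mulrA; congr (_ * _).
    by rewrite big_split /= prod_natb.
  rewrite -mulr_suml -prod_natb; congr (_ * _).
  rewrite -(bigA_distr_bigA (fun k (c : bool) => (if c then 1 else -1) * ((k \in codom f) ==> c)%:R)) /=.
  apply: eq_bigr => k _; rewrite big_bool /= implybT implybF mul1r.
  by case: (k \in codom f); rewrite /= ?mulr1 ?mulr0 ?addr0 // addrN.
under eq_bigr => f _ do rewrite E2.
rewrite (bigID (fun f : {ffun 'I_r -> 'I_r} => [forall k, k \in codom f])) /=.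
rewrite [X in _ + X]big1 ?addr0; last by move=> f /negbTE ->; rewrite mul0r.
have -> : \sum_(f : {ffun 'I_r -> 'I_r} | [forall k, k \in codom f])
   ([forall k, k \in codom f])%:R * \prod_t y (f t) =
   \sum_(f in [set f : {ffun 'I_r -> 'I_r} | injectiveb f]) \prod_k y k.
  apply: eq_big => [f|f Hf].
    rewrite inE; apply/idP/idP => [H|/injectiveP H]; first by apply/injectiveP/surj_inj.
    by apply/forallP=> k; apply: injF_onto.
  rewrite Hf mul1r; symmetry; apply: (reindex_inj (h := f)).
  exact: surj_inj.
by rewrite sumr_const mulr_natl.
Qed.

Section M.
Variable R : realType.
Variable m : nat.

Lemma mono_prod (i0 : 'I_m) k (a : 'X_{1..m}) : mdeg a = k ->
  exists psi : 'I_k -> 'I_m, \prod_(t < k) ('X_(psi t) : {mpoly R[m]}) = 'X_[a].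
Proof.
elim: k a => [|k IH] a Ha.
  exists (fun _ => i0); rewrite big_ord0.
  by move/eqP: Ha; rewrite mdeg_eq0 => /eqP ->; rewrite mpolyX0.
have [i Hi] : exists i, (0 < a i)%N.
  apply/existsP; apply: contraT; rewrite negb_exists => /forallP H.
  move: Ha; rewrite mdegE big1 // => j _; by have := H j; rewrite lt0n negbK => /eqP.
have Hle : (U_(i) <= a)%MM.
  apply/mnm_lepP => j; rewrite mnm1E; case: eqP => [<-|] //.
have Hd : mdeg (a - U_(i))%MM = k.
  move: (mdegD (a - U_(i))%MM U_(i)); rewrite submK // Ha mdeg1 addn1.
  by move/eqP; rewrite eqSS => /eqP.
have [psi Hpsi] := IH _ Hd.
exists (fun t : 'I_k.+1 => if unlift ord_max t is Some t' then psi t' else i).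
rewrite big_ord_recr /= unlift_none.
have E : forall t : 'I_k, widen_ord (leqnSn k) t = lift ord_max t.
  by move=> t; apply: val_inj; rewrite /= /bump leqNgt ltn_ord.
under eq_bigr => t _ do rewrite E liftK.
by rewrite Hpsi -mpolyXD submK.
Qed.


Definition lin r (b : mindex m r) : {mpoly R[m]} := \sum_(i < m) ((b i : nat)%:R : R) *: 'X_i.
Definition monof r (a : mindex m r) : 'X_{1..m} := [multinom (a i : nat) | i < m].

Lemma mdeg_monof r (a : mindex m r) : mdeg (monof a) = mindex_len a.
Proof. by rewrite mdegE /mindex_len; apply: eq_bigr => i _; rewrite mnmE. Qed.

Lemma count_card (I : finType) (P : pred I) : (\sum_k (P k : nat))%N = #|P|.
Proof. by rewrite -sum1_card [RHS]big_mkcond; apply: eq_bigr => k _; rewrite unfold_in; case: (P k). Qed.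

Definition bphi r (psi : 'I_r -> 'I_m) (phi : {ffun 'I_r -> bool}) : mindex m r :=
  [ffun i => inord #|[pred k | phi k && (psi k == i)]|].

Lemma bphiE r (psi : 'I_r -> 'I_m) phi i :
  (bphi psi phi i : nat) = #|[pred k | phi k && (psi k == i)]|.
Proof.
rewrite ffunE inordK // ltnS; apply: leq_trans (max_card _) _; by rewrite card_ord.
Qed.

Lemma sum_ind r (psi : 'I_r -> 'I_m) (phi : {ffun 'I_r -> bool}) k :
  (\sum_i ((phi k && (psi k == i)) : nat))%N = phi k.
Proof.
rewrite (bigD1 (psi k)) //= eqxx andbT big1 ?addn0 // => i Hi.
by rewrite eq_sym (negbTE Hi) andbF.
Qed.

Lemma lin_bphi r (psi : 'I_r -> 'I_m) phi :
  lin (bphi psi phi) = \sum_k (if phi k then 'X_(psi k) else 0).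
Proof.
transitivity (\sum_k \sum_i (((phi k && (psi k == i)) : nat)%:R : R) *: ('X_i : {mpoly R[m]})); last first.
  apply: eq_bigr => k _; rewrite (bigD1 (psi k)) //= eqxx andbT big1 ?addr0.
    by case: (phi k); rewrite ?scale1r ?scale0r.
  by move=> i Hi; rewrite eq_sym (negbTE Hi) andbF scale0r.
rewrite exchange_big /lin; apply: eq_bigr => i _.
by rewrite -scaler_suml -natr_sum count_card bphiE.
Qed.

Lemma len_bphi r (psi : 'I_r -> 'I_m) phi : (mindex_len (bphi psi phi) <= r)%N.
Proof.
rewrite /mindex_len.
under eq_bigr => i _ do rewrite bphiE -count_card.
rewrite exchange_big /=.
under eq_bigr => k _ do rewrite sum_ind.
rewrite -[X in (_ <= X)%N](card_ord r) -sum1_card.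
by apply: leq_sum => k _; case: (phi k).
Qed.

Lemma lin0 r (b : mindex m r) : mindex_len b = 0%N -> lin b = 0.
Proof.
move/eqP; rewrite /mindex_len sum_nat_eq0 => /forallP H.
rewrite /lin big1 // => i _; by have := H i; rewrite /= => /eqP ->; rewrite scale0r.
Qed.

Lemma span r (i0 : 'I_m) (a : mindex m r) : (0 < r)%N -> mindex_len a = r ->
  exists w : mindex m r -> R,
    \sum_(b | admissible b) w b *: (lin b)^+r = 'X_[monof a].
Proof.
move=> r0 Ha.
have [psi Hpsi] := mono_prod i0 (etrans (mdeg_monof a) Ha).
set N := #|[set f : {ffun 'I_r -> 'I_r} | injectiveb f]|.
have HN : (N%:R : R) != 0.
  rewrite pnatr_eq0 -lt0n; apply/card_gt0P; exists [ffun t => t].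
  by rewrite inE; apply/injectiveP => x y; rewrite !ffunE.
pose sg (phi : {ffun 'I_r -> bool}) : R := \prod_k (if phi k then 1 else -1).
have P := polar (fun k => ('X_(psi k) : {mpoly R[m]})).
rewrite Hpsi in P.
have P2 : \sum_(phi : {ffun 'I_r -> bool}) sg phi *: (lin (bphi psi phi))^+r
   = (N%:R : R) *: 'X_[monof a].
  rewrite scaler_nat -mulr_natl -P; apply: eq_bigr => phi _.
  rewrite lin_bphi -mulr_algl; congr (_ * _).
  rewrite /sg -in_algE rmorph_prod; apply: eq_bigr => k _.
  by case: (phi k); rewrite ?rmorph1 ?rmorphN1.
exists (fun b => (N%:R)^-1 * \sum_(phi | bphi psi phi == b) sg phi).
apply: (@scalerI _ _ (N%:R : R)) => //; rewrite -P2.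
rewrite (bigID (fun phi => admissible (bphi psi phi))) /=.
rewrite [X in _ = _ + X]big1 ?addr0; last first.
  move=> phi; rewrite /admissible len_bphi andbT -eqn0Ngt => /eqP H.
  by rewrite lin0 // expr0n eqn0Ngt r0 scaler0.
rewrite (partition_big (fun phi => bphi psi phi) (@admissible m r)) //=.
rewrite scaler_sumr; apply: eq_big => // b Hb.
rewrite scalerA mulrA mulfV // mul1r scaler_suml.
apply: eq_big => [phi|phi Hp]. 2: by rewrite -(eqP Hp).
by case: eqP => [->|_]; rewrite ?andbF ?Hb.
Qed.

Lemma mcoeff_ptrunc k (p : {mpoly R[m]}) mono :
  (ptrunc k p)@_mono = if (mdeg mono <= k)%N then p@_mono else 0.
Proof.
rewrite /ptrunc raddf_sum /= big_mkcond /=.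
under eq_bigr => mm _ do rewrite mcoeffZ mcoeffX.
case: (boolP (mono \in msupp p)) => Hin.
  rewrite (bigD1_seq mono) ?msupp_uniq //= eqxx mulr1 big1 ?addr0 //.
  by move=> mm Hm; rewrite (negbTE Hm) mulr0 if_same.
rewrite big1_seq ?memN_msupp_eq0 ?if_same // => mm /andP [_ Hm].
case: eqP => [E|_]; first by move: Hin; rewrite -E Hm.
by rewrite mulr0 if_same.
Qed.

Lemma monof_inj r : injective (@monof r).
Proof.
move=> a a' E; apply/ffunP => i; apply/val_inj.
by have := congr1 (fun mm : 'X_{1..m} => mm i) E; rewrite /= !mnmE.
Qed.

Lemma homog_decomp r (p : {mpoly R[m]}) : (msize p <= r.+1)%N -> ptrunc r.-1 p = 0 ->
  p = \sum_(a : mindex m r | mindex_len a == r) p@_(monof a) *: 'X_[monof a].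
Proof.
move=> Hs Ht; apply/mpolyP => mono.
rewrite raddf_sum /=; under eq_bigr do rewrite mcoeffZ mcoeffX.
case: (ltngtP (mdeg mono) r) => Hd.
- have := congr1 (mcoeff mono) Ht; rewrite mcoeff_ptrunc.
  have -> : (mdeg mono <= r.-1)%N by move: Hd; case: (r).
  rewrite mcoeff0 => ->; rewrite big1 // => a /eqP Ha.
  case: eqP => [E|_]; last by rewrite mulr0.
  by move: Hd; rewrite -E mdeg_monof Ha ltnn.
- rewrite memN_msupp_eq0; last by apply: msize_mdeg_ge; exact: leq_trans Hs Hd.
  rewrite big1 // => a /eqP Ha.
  case: eqP => [E|_]; last by rewrite mulr0.
  by move: Hd; rewrite -E mdeg_monof Ha ltnn.
- pose a0 : mindex m r := [ffun i => inord (mono i)].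
  have Ea0 : monof a0 = mono.
    apply/mnmP => i; rewrite mnmE ffunE inordK // ltnS -Hd mdegE (bigD1 i) //=.
    exact: leq_addr.
  have La0 : mindex_len a0 == r by rewrite -mdeg_monof Ea0 Hd.
  rewrite (bigD1 a0) //= Ea0 eqxx mulr1 big1 ?addr0 // => a /andP [_ Ha].
  case: eqP => [E|_]; last by rewrite mulr0.
  by move: Ha; rewrite -Ea0 in E; rewrite (monof_inj E) eqxx.
Qed.

Lemma msize_homog d (p : {mpoly R[m]}) : p \is d.-homog -> (msize p <= d.+1)%N.
Proof.
move/dhomogP => H; rewrite msizeE; apply/bigmax_leqP_seq => mm Hm _.
by rewrite H.
Qed.

Lemma ptrunc_homog r (p : {mpoly R[m]}) : (0 < r)%N -> p \is r.-homog -> ptrunc r.-1 p = 0.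
Proof.
move=> r0 Hp; apply/mpolyP => mono; rewrite mcoeff_ptrunc mcoeff0.
case: ifP => // H; apply: (dhomog_nemf_coeff Hp).
apply/eqP => E; move: r0 H; rewrite E; case: (r) => // r1 _ /=; by rewrite ltnn.
Qed.

Lemma lin_homog r (b : mindex m r) : lin b \is 1.-homog.
Proof.
rewrite /lin; apply: rpred_sum => i _; apply: rpredZ.
rewrite dhomogX; apply/eqP; exact: mdeg1.
Qed.

Lemma linr_homog r (b : mindex m r) : (lin b)^+r \is r.-homog.
Proof. by have := dhomogMn r (lin_homog b); rewrite mul1n. Qed.

Lemma mderiv_lin r (b : mindex m r) i : mderiv i (lin b) = ((b i : nat)%:R : R) *: 1.
Proof.
rewrite /lin linear_sum /=.
under eq_bigr => j _ do rewrite mderivZ mderivX mnm1E.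
rewrite (bigD1 i) //= eqxx big1 ?addr0.
  have -> : (U_(i) - U_(i))%MM = 0%MM.
    by apply/mnmP => j; rewrite mnmBE subnn mnmE.
  by rewrite mpolyX0 scale1r.
by move=> j Hj; rewrite (negbTE Hj) scale0r scaler0.
Qed.

Lemma mderiv_pow i (p : {mpoly R[m]}) k :
  mderiv i (p ^+ k.+1) = (k.+1)%:R *: (p ^+ k * mderiv i p).
Proof.
elim: k => [|k IH]; first by rewrite expr1 expr0 mul1r scale1r.
rewrite exprS mderivM IH -scalerAr mulrA -exprS [mderiv i p * _]mulrC.
by rewrite [in RHS]mulrS scalerDl scale1r.
Qed.

Lemma mderiv_prim r k (b : mindex m r) (c : R) i :
  mderiv i (c *: (lin b)^+k.+1) = ((b i : nat)%:R : R) *: (c *: ((k.+1)%:R *: (lin b)^+k)).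
Proof.
rewrite mderivZ mderiv_pow mderiv_lin -scalerAr mulr1 !scalerA.
by congr (_ *: _); rewrite mulrC mulrA.
Qed.

Lemma deriv_cond r k (b : mindex m r) (c : R) (alpha : 'X_{1..m}) (x nu : point R m) :
  tau_beta b x nu ->
  \sum_(i < m) nu i * ((mderiv i (mderivm alpha (c *: (lin b)^+k.+1))).@[fun _ => 0]) = 0.
Proof.
rewrite /tau_beta => Hnu.
set Q := c *: ((k.+1)%:R *: (lin b)^+k).
transitivity (\sum_(i < m) ((b i : nat)%:R * nu i) * (mderivm alpha Q).@[fun _ => 0]).
  apply: eq_bigr => i _.
  rewrite -mderivmU1m -mderivmDm addmC mderivmDm mderivmU1m mderiv_prim.
  by rewrite mderivmZ mevalZ mulrA [nu i * _]mulrC.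
by rewrite -mulr_suml Hnu mul0r.
Qed.

End M.
Arguments lin {R m r} b.

Theorem mainTheorem11 (R : realType) (m n r : nat) :
  (1 <= m)%N -> (1 <= n)%N -> (1 <= r)%N ->
  exists L : mindex m r -> jet R m n -> jet R m n,
    (forall b, fib_linear (L b)) /\
    forall sigma : point R m -> jet R m n,
      (forall x, in_cube x -> is_rjet r (sigma x)) ->
      (forall x, in_cube x -> jet_trunc r.-1 (sigma x) = (fun _ => 0)) ->
      let sigma_b := fun b x => L b (sigma x) in
      (forall x, in_cube x ->
         sigma x = (fun j => \sum_(b : mindex m r | admissible b) sigma_b b x j)) /\
      (forall b, admissible b ->
         (forall x, in_cube x -> is_rjet r (sigma_b b x)) /\
         primitive_section r (tau_beta b) (sigma_b b)) /\
      (forall A : point R m -> Prop, cube_closed A ->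
         (exists U, cube_open U /\ (forall x, A x -> U x) /\
                    (forall x, U x -> sigma x = (fun _ => 0))) ->
         exists V, cube_open V /\ (forall x, A x -> V x) /\
                   (forall b, admissible b -> forall x, V x -> sigma_b b x = (fun _ => 0))).
Proof.
move=> Hm Hn; case: r => // r1 Hr; pose r := r1.+1.
pose i0 : 'I_m := Ordinal Hm.
have HW : forall a : mindex m r, exists w : mindex m r -> R,
    mindex_len a = r -> \sum_(b | admissible b) w b *: (lin b)^+r = 'X_[monof a].
  move=> a; case: (boolP (mindex_len a == r)) => [/eqP Ha|Ha].
    have [w Hw] := @span R m r i0 a Hr Ha; by exists w.
  by exists (fun _ => 0) => E; move: Ha; rewrite E eqxx.
pose W a := proj1_sig (constructive_indefinite_description _ (HW a)).
have HWs : forall a, mindex_len a = r ->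
    \sum_(b | admissible b) W a b *: (lin b)^+r = 'X_[monof a].
  move=> a; exact: (proj2_sig (constructive_indefinite_description _ (HW a))).
pose L (b : mindex m r) (J : jet R m n) : jet R m n := fun j =>
  if admissible b then
    (\sum_(a : mindex m r | mindex_len a == r) (J j)@_(monof a) * W a b) *: (lin b)^+r
  else 0.
exists L; split.
  move=> b c u v j; rewrite /L; case: ifP => _; last by rewrite scaler0 addr0.
  rewrite scalerA -scalerDl; congr (_ *: _).
  rewrite mulr_sumr -big_split /=; apply: eq_bigr => a _.
  by rewrite mcoeffD mcoeffZ mulrDl mulrA.
move=> sigma H1 H2 sigma_b; split; [|split].
- move=> x Hx; apply: functional_extensionality => j.
  have Ht : ptrunc r.-1 (sigma x j) = 0.
    by have := congr1 (fun f => f j) (H2 x Hx).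
  rewrite {1}(homog_decomp (H1 x Hx j) Ht).
  transitivity (\sum_(b | admissible b) \sum_(a : mindex m r | mindex_len a == r)
      ((sigma x j)@_(monof a) * W a b) *: (lin b)^+r); last first.
    apply: eq_bigr => b Hb; rewrite /sigma_b /L Hb scaler_suml //.
  rewrite exchange_big /=; apply: eq_bigr => a /eqP Ha.
  rewrite -(HWs a Ha) scaler_sumr; apply: eq_bigr => b _.
  by rewrite scalerA.
- move=> b Hb; split.
    move=> x Hx j; rewrite /sigma_b /L Hb.
    apply: leq_trans (msizeZ_le _ _) _; apply: msize_homog; exact: linr_homog.
  move=> x Hx; split.
    apply: functional_extensionality => j; rewrite /jet_trunc /sigma_b /L Hb.
    by apply: ptrunc_homog => //; apply: dhomogZ; exact: linr_homog.
  move=> alpha nu j _ Hnu; rewrite /dnu_dalpha /sigma_b /L Hb.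
  exact: (@deriv_cond R m r r1 b _ alpha x nu Hnu).
- move=> A _ [U [HU [HAU HUs]]]; exists U; split => //; split => //.
  move=> b Hb x Hx; apply: functional_extensionality => j.
  rewrite /sigma_b /L Hb (HUs x Hx) big1 ?scale0r // => a _.
  by rewrite mcoeff0 mul0r.
Qed.
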